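(* Let $M$ be a Turing machine (bi-infinite tape, symbols $\{0,1,3\}$ with $0$ blank, states $\{0,\dots,|Q|-1\}$) computing a function $f:\Sigma^*\to\Sigma^*$, $\Sigma=\{1,3\}$, in time $T(\ell(\omega))$ on input $\omega$. One can construct a function $\tilde f:\mathbb N\times\mathbb R\to\mathbb R$ in $\mathbb{LDL}^\circ$ such that, for every input $\omega$, $\tilde f(2^{T(\ell(\omega))},\gamma_{word}(\omega))$ provides $f(\omega)$ with respect to the encoding $\gamma_{word}$, i.e. equals $\gamma_{word}(f(\omega))$.
   Context: For a word $w=w_0w_1\dots$ over $\{0,1,3\}$, $\gamma_{word}(w)=\sum_{i\ge0}w_i4^{-(i+1)}$. The input $\omega$ is initially written to the right of the head (left part blank) in the initial state, and the output is read as the tape content to the right of the head; halting configurations are fixed points of the step function. $\ell$ denotes length. $\overline{\mathrm{sg}}:\mathbb R\to\mathbb R$ is a fixed continuous piecewise affine function equal to $1$ for $x>3/4$ and $0$ for $x<1/4$. An $\overline{\mathrm{sg}}$-polynomial expression is built from $+,-,\times,\overline{\mathrm{sg}}$ over variables and integer constants; $\deg(x,x)=1$, $\deg(x,x')=0$ for other variables/constants, $\deg(x,P+Q)=\max$, $\deg(x,P\times Q)=$ sum, $\deg(x,\overline{\mathrm{sg}}(P))=0$; $\mathbf u$ is essentially linear in $\mathbf f$ if $\mathbf u=\mathbf A\cdot\mathbf f+\mathbf B$ with $\mathbf A,\mathbf B$ $\overline{\mathrm{sg}}$-polynomial expressions of degree $0$ in $\mathbf f$. Linear length ODE schema: $\mathbf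 f(0,\mathbf y)=\mathbf g(\mathbf y)$, $\mathbf f(x+1,\mathbf y)=\mathbf f(x,\mathbf y)+(\ell(x+1)-\ell(x))\,\mathbf u(\mathbf f(x,\mathbf y),\mathbf h(x,\mathbf y),x,\mathbf y)$ with $\mathbf u$ essentially linear in $\mathbf f(x,\mathbf y)$, where $\ell:\mathbb N\to\mathbb N$ is binary length. $\mathbb{LDL}^\circ$: smallest class of functions (arguments/values in $\mathbb N,\mathbb Z,\mathbb Q,\mathbb R$, composition partial) containing $0,1$, projections, $\ell$, $+,-,\times$ (over the reals), $\overline{\mathrm{sg}}$, $x\mapsto x/2$, closed under composition and linear length ODE. *)

(* Defs.v *)
From Stdlib Require Import Reals List ZArith Arith Lia.
Import ListNotations.
Open Scope R_scope.

Definition piecewise_affine (s : R -> R) : Prop :=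
  exists bs : list R, forall x y, x <= y ->
    (forall b, In b bs -> ~ (x < b < y)) ->
    exists a c, forall z, x <= z <= y -> s z = a * z + c.

Definition IsSgBar (s : R -> R) : Prop :=
  continuity s /\ piecewise_affine s /\
  (forall x, 3/4 < x -> s x = 1) /\ (forall x, x < 1/4 -> s x = 0).

(* binary length on N : l(x) = floor(log2 x) + 1, l(0) = 1 *)
Definition blen (n : nat) : nat := S (Nat.log2 n).

Definition to_nat_opt (x : R) : option nat :=
  let N := Z.to_nat (Int_part x) in
  if Req_EM_T x (INR N) then Some N else None.

Inductive sexp (V : Type) : Type :=
| SVar : V -> sexp V
| SConst : Z -> sexp V
| SAdd : sexp V -> sexp V -> sexp V
| SSub : sexp V -> sexp V -> sexp V
| SMul : sexp V -> sexp V -> sexp V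
| SSg : sexp V -> sexp V.
Arguments SVar {V}. Arguments SConst {V}. Arguments SAdd {V}.
Arguments SSub {V}. Arguments SMul {V}. Arguments SSg {V}.

Fixpoint seval {V} (sg : R -> R) (env : V -> R) (e : sexp V) : R :=
  match e with
  | SVar v => env v
  | SConst z => IZR z
  | SAdd a b => seval sg env a + seval sg env b
  | SSub a b => seval sg env a - seval sg env b
  | SMul a b => seval sg env a * seval sg env b
  | SSg a => sg (seval sg env a)
  end.

Fixpoint sdeg {V} (P : V -> bool) (e : sexp V) : nat :=
  match e with
  | SVar v => if P v then 1%nat else 0%nat
  | SConst _ => 0%nat
  | SAdd a b | SSub a b => Nat.max (sdeg P a) (sdeg P b)
  | SMul a b => (sdeg P a + sdeg P b)%nat
  | SSg _ => 0%nat
  end.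

(* variables of u : components of f(x,y), of h(x,y), x, components of y *)
Inductive uvar : Type := UF (j : nat) | UH (j : nat) | UX | UY (j : nat).
Definition isF (v : uvar) : bool := match v with UF _ => true | _ => false end.

Definition pfun := list R -> option R.
Definition pdflt : pfun := fun _ => None.

Fixpoint opt_all (l : list (option R)) : option (list R) :=
  match l with
  | [] => Some []
  | Some a :: l' => match opt_all l' with Some v => Some (a :: v) | None => None end
  | None :: _ => None
  end.

Definition cst_fun (n : nat) (c : R) : pfun :=
  fun xs => if Nat.eqb (length xs) n then Some c else None.
Definition proj_fun (n i : nat) : pfun :=
  fun xs => if Nat.eqb (length xs) n then Some (nth i xs 0) else None.
Definition un_fun (f : R -> R) : pfun :=
  fun xs => match xs with [x] => Some (f x) | _ => None end.
Definition bin_fun (f : R -> R -> R) : pfun :=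
  fun xs => match xs with [x; y] => Some (f x y) | _ => None end.
Definition len_fun : pfun :=
  fun xs => match xs with
            | [x] => match to_nat_opt x with
                     | Some N => Some (INR (blen N)) | None => None end
            | _ => None end.
Definition comp_fun (F : pfun) (G : list pfun) : pfun :=
  fun xs => match opt_all (map (fun g => g xs) G) with
            | Some ys => F ys | None => None end.

Definition rsum (l : list R) : R := fold_right Rplus 0 l.

(* one step of the linear length ODE, with u = A . f + B *)
Definition ode_step (sg : R -> R) (m : nat) (A : list (list (sexp uvar)))
  (B : list (sexp uvar)) (fv hv : list R) (N : nat) (ys : list R) : list R :=
  let env (v : uvar) : R :=
    match v with
    | UF j => nth j fv 0 | UH j => nth j hv 0
    | UX => INR N | UY j => nth j ys 0 end in
  map (fun i =>
         nth i fv 0 + (INR (blen (S N)) - INR (blen N)) *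
           (rsum (map (fun j => seval sg env (nth j (nth i A []) (SConst 0%Z)) * nth j fv 0)
                      (seq 0 m))
            + seval sg env (nth i B (SConst 0%Z))))
      (seq 0 m).

Fixpoint ode_iter (sg : R -> R) (m : nat) (g h : list pfun)
  (A : list (list (sexp uvar))) (B : list (sexp uvar)) (N : nat) (ys : list R)
  : option (list R) :=
  match N with
  | O => opt_all (map (fun gi => gi ys) g)
  | S N' =>
      match ode_iter sg m g h A B N' ys, opt_all (map (fun hj => hj (INR N' :: ys)) h) with
      | Some fv, Some hv => Some (ode_step sg m A B fv hv N' ys)
      | _, _ => None
      end
  end.

Definition ode_fun (sg : R -> R) (n m : nat) (g h : list pfun)
  (A : list (list (sexp uvar))) (B : list (sexp uvar)) (i : nat) : pfun :=
  fun xs => match xs with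
            | x :: ys =>
                if Nat.eqb (length ys) n then
                  match to_nat_opt x with
                  | Some N => option_map (fun v => nth i v 0) (ode_iter sg m g h A B N ys)
                  | None => None
                  end
                else None
            | [] => None
            end.

Inductive LDL (sg : R -> R) : nat -> pfun -> Prop :=
| LDL_zero n : LDL sg n (cst_fun n 0)
| LDL_one n : LDL sg n (cst_fun n 1)
| LDL_proj n i : (i < n)%nat -> LDL sg n (proj_fun n i)
| LDL_len : LDL sg 1 len_fun
| LDL_add : LDL sg 2 (bin_fun Rplus)
| LDL_sub : LDL sg 2 (bin_fun Rminus)
| LDL_mul : LDL sg 2 (bin_fun Rmult)
| LDL_sg : LDL sg 1 (un_fun sg)
| LDL_half : LDL sg 1 (un_fun (fun x => x / 2))
| LDL_comp n k (F : pfun) (G : list pfun) :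
    LDL sg k F -> length G = k ->
    (forall j, (j < k)%nat -> LDL sg n (nth j G pdflt)) ->
    LDL sg n (comp_fun F G)
| LDL_ode n m k (g h : list pfun) (A : list (list (sexp uvar))) (B : list (sexp uvar)) :
    length g = m -> (forall j, (j < m)%nat -> LDL sg n (nth j g pdflt)) ->
    length h = k -> (forall j, (j < k)%nat -> LDL sg (S n) (nth j h pdflt)) ->
    length A = m -> (forall r, In r A -> length r = m) -> length B = m ->
    (forall r e, In r A -> In e r -> sdeg isF e = 0%nat) ->
    (forall e, In e B -> sdeg isF e = 0%nat) ->
    forall i, (i < m)%nat -> LDL sg (S n) (ode_fun sg n m g h A B i).

Inductive sym : Type := B0 | S1 | S3.
Definition symval (a : sym) : R := match a with B0 => 0 | S1 => 1 | S3 => 3 end.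
Inductive sig13 : Type := A1 | A3.
Definition inj13 (a : sig13) : sym := match a with A1 => S1 | A3 => S3 end.

Inductive move : Type := MLeft | MRight | MStay.

Record TM : Type := {
  nQ : nat;
  q0 : nat;
  delta : nat -> sym -> nat * sym * move;
  q0_ok : (q0 < nQ)%nat;
  delta_ok : forall q a, (q < nQ)%nat -> (fst (fst (delta q a)) < nQ)%nat
}.

(* configuration: state, left part (nearest cell first),
   right part (cell under the head first) *)
Record config : Type := Cfg { cstate : nat; cleft : nat -> sym; cright : nat -> sym }.

Definition scons (a : sym) (t : nat -> sym) : nat -> sym :=
  fun n => match n with O => a | S n' => t n' end.
Definition stail (t : nat -> sym) : nat -> sym := fun n => t (S n).

Definition step (M : TM) (c : config) : config :=
  match delta M (cstate c) (cright c 0%nat) with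
  | (q', a', MRight) => Cfg q' (scons a' (cleft c)) (stail (cright c))
  | (q', a', MLeft) => Cfg q' (stail (cleft c)) (scons (cleft c 0%nat) (scons a' (stail (cright c))))
  | (q', a', MStay) => Cfg q' (cleft c) (scons a' (stail (cright c)))
  end.

Definition tape_of (w : list sym) : nat -> sym := fun n => nth n w B0.

Definition init_config (M : TM) (w : list sig13) : config :=
  Cfg (q0 M) (fun _ => B0) (tape_of (map inj13 w)).

(* M computes f in time T(l(w)): after T(|w|) steps the configuration is a
   halting one (fixed point of step) and the right part is f(w). *)
Definition computes_in_time (M : TM) (f : list sig13 -> list sig13) (T : nat -> nat) : Prop :=
  forall w : list sig13,
    let c := Nat.iter (T (length w)) (step M) (init_config M w) in
    step M c = c /\ cright c = tape_of (map inj13 (f w)).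

Definition gamma_word (w : list sym) : R :=
  rsum (map (fun i => symval (nth i w B0) * / 4 ^ (S i)) (seq 0 (length w))).

(* Main.v *)
Require Import Defs.
From Stdlib Require Import Reals List ZArith Arith Lia Lra.
Import ListNotations.
Open Scope R_scope.

Lemma to_nat_INR n : to_nat_opt (INR n) = Some n.
Proof.
  unfold to_nat_opt. rewrite Int_part_INR, Nat2Z.id.
  destruct (Req_EM_T (INR n) (INR n)); [reflexivity|congruence].
Qed.

Fixpoint gam4 (l : list sym) : R :=
  match l with [] => 0 | a :: l' => (symval a + gam4 l') / 4 end.

Definition ecode (a : sym) : R := match a with B0 => 2 | S1 => 4 | S3 => 6 end.
Fixpoint enc8 (l : list sym) : R :=
  match l with [] => 0 | a :: l' => (ecode a + enc8 l') / 8 end.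

Lemma rsum_map_shift (F : nat -> R) k n :
  rsum (map F (seq (S k) n)) = rsum (map (fun i => F (S i)) (seq k n)).
Proof.
  revert k; induction n; intros k; simpl; [reflexivity|]. rewrite IHn. reflexivity.
Qed.

Lemma gamma_word_gam4 l : gamma_word l = gam4 l.
Proof.
  unfold gamma_word. induction l as [|a l IH]; [reflexivity|].
  simpl length. simpl seq. simpl map. simpl rsum. rewrite rsum_map_shift.
  simpl gam4. rewrite <- IH. simpl nth.
  assert (E: rsum (map (fun i => symval (nth i l B0) * / (4 * 4 ^ S i)) (seq 0 (length l)))
     = / 4 * rsum (map (fun i => symval (nth i l B0) * / 4 ^ S i) (seq 0 (length l)))).
  { generalize (seq 0 (length l)). intros l0. induction l0; simpl; [lra|]. simpl in IHl0.
    rewrite IHl0. rewrite Rinv_mult. ring. }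
  rewrite E. simpl pow. field.
Qed.

Lemma enc8_bounds l : 0 <= enc8 l <= 6/7.
Proof. induction l as [|a l IH]; simpl; [lra|]. destruct a; simpl; lra. Qed.

Lemma gam4_inj_bounds s : 0 <= gam4 (map inj13 s) < 1.
Proof. induction s as [|a s IH]; simpl; [lra|]. destruct a; simpl; lra. Qed.

Lemma gam4_blank l : (forall n, nth n l B0 = B0) -> gam4 l = 0.
Proof.
  induction l as [|a l IH]; intros H; simpl; [reflexivity|].
  pose proof (H 0%nat) as H0; simpl in H0; subst a. simpl. rewrite IH; [lra|]. intros n. exact (H (S n)).
Qed.

Lemma gam4_ext l1 l2 : (forall n, nth n l1 B0 = nth n l2 B0) -> gam4 l1 = gam4 l2.
Proof.
  revert l2; induction l1 as [|a l1 IH]; intros l2 H.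
  - symmetry. apply gam4_blank. intros n. rewrite <- H. destruct n; reflexivity.
  - destruct l2 as [|b l2].
    + apply gam4_blank. intros n. rewrite H. destruct n; reflexivity.
    + simpl. pose proof (H 0%nat) as H0. simpl in H0. subst b.
      rewrite (IH l2); [reflexivity|]. intros n. exact (H (S n)).
Qed.

Definition Fv (j : nat) : sexp uvar := SVar (UF j).
Definition Hv (j : nat) : sexp uvar := SVar (UH j).
Definition K (z : Z) : sexp uvar := SConst z.

Definition ind8 (j : nat) (k : Z) : sexp uvar := SSg (SSub (SMul (K 56) (Fv j)) (K k)).
Definition I2 := ind8 2 6. Definition I4 := ind8 2 20. Definition I6 := ind8 2 34.
Definition K2 := ind8 1 6. Definition K4 := ind8 1 20. Definition K6 := ind8 1 34.
Definition J1 := SSg (SSub (SMul (K 8) (Fv 3)) (K 1)).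
Definition J3 := SSg (SSub (SMul (K 4) (Fv 3)) (K 2)).
Definition isB0 := SAdd (SMul I2 (SSub I2 I4)) (SMul (SSub (K 1) I2) (SSub (K 1) J1)).
Definition isS1 := SAdd (SMul I2 (SSub I4 I6)) (SMul (SSub (K 1) I2) (SSub J1 J3)).
Definition isS3 := SAdd (SMul I2 I6) (SMul (SSub (K 1) I2) J3).
Definition dVe := SMul (K 2) (SAdd I2 (SAdd I4 I6)).
Definition dLe := SMul (K 2) (SAdd K2 (SAdd K4 K6)).
Definition c0e := SAdd isS1 (SMul (K 3) isS3).
Definition eL0e := SAdd (K 2) (SMul (K 2) (SAdd K4 K6)).
Definition sL0e := SAdd K4 (SMul (K 2) K6).

Definition sb (x a : sym) : R :=
  match x, a with B0, B0 | S1, S1 | S3, S3 => 1 | _, _ => 0 end.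
Definition hd0 (l : list sym) : sym := nth 0 l B0.
Definition dig (l : list sym) : R := match l with [] => 0 | a :: _ => ecode a end.

Definition trip (l : list sym) : R * R * R :=
  match l with [] => (0,0,0) | B0 :: _ => (1,0,0) | S1 :: _ => (1,1,0) | S3 :: _ => (1,1,1) end.


Lemma ind8_eval (sg : R -> R) (env : uvar -> R) j l :
  (forall x, 3/4 < x -> sg x = 1) -> (forall x, x < 1/4 -> sg x = 0) ->
  env (UF j) = enc8 l ->
  (seval sg env (ind8 j 6), seval sg env (ind8 j 20), seval sg env (ind8 j 34)) = trip l.
Proof.
  intros H1 H0 E. unfold ind8, K, Fv; simpl. rewrite E.
  destruct l as [|a l]; simpl.
  - rewrite !H0 by lra. reflexivity.
  - pose proof (enc8_bounds l). destruct a; simpl.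
    + rewrite H1 by lra. rewrite !H0 by lra. reflexivity.
    + rewrite !H1 by lra. rewrite !H0 by lra. reflexivity.
    + rewrite !H1 by lra. reflexivity.
Qed.

Lemma read_eval (sg : R -> R) (env : uvar -> R) p s :
  (forall x, 3/4 < x -> sg x = 1) -> (forall x, x < 1/4 -> sg x = 0) ->
  env (UF 2) = enc8 p -> env (UF 3) = gam4 (p ++ map inj13 s) ->
  let a := hd0 (p ++ map inj13 s) in
  seval sg env isB0 = sb B0 a /\ seval sg env isS1 = sb S1 a /\
  seval sg env isS3 = sb S3 a /\ seval sg env dVe = dig p /\
  seval sg env c0e = symval a.
Proof.
  intros H1 H0 EV EG a.
  pose proof (ind8_eval sg env 2 p H1 H0 EV) as T.
  unfold isB0, isS1, isS3, dVe, c0e, I2, I4, I6. simpl seval.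
  destruct p as [|x p].
  - simpl in T. injection T as T2 T4 T6. rewrite T2, T4, T6.
    unfold J1, J3, K, Fv; simpl seval. rewrite EG. simpl app in *.
    destruct s as [|y s]; simpl in a |- *.
    + rewrite !H0 by lra. subst a; simpl. repeat split; lra.
    + pose proof (gam4_inj_bounds s). destruct y; simpl in a |- *; subst a; simpl.
      * rewrite H1 by lra. rewrite H0 by lra. repeat split; lra.
      * rewrite !H1 by lra. repeat split; lra.
  - destruct x; simpl in T; injection T as T2 T4 T6; rewrite T2, T4, T6;
      subst a; simpl; repeat split; lra.
Qed.

Lemma left_eval (sg : R -> R) (env : uvar -> R) pL :
  (forall x, 3/4 < x -> sg x = 1) -> (forall x, x < 1/4 -> sg x = 0) ->
  env (UF 1) = enc8 pL ->
  seval sg env dLe = dig pL /\ seval sg env eL0e = ecode (hd0 pL) /\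
  seval sg env sL0e = symval (hd0 pL).
Proof.
  intros H1 H0 EL.
  pose proof (ind8_eval sg env 1 pL H1 H0 EL) as T.
  unfold dLe, eL0e, sL0e, K2, K4, K6. simpl seval.
  destruct pL as [|x p].
  - simpl in T. injection T as T2 T4 T6. rewrite T2, T4, T6. simpl. repeat split; lra.
  - destruct x; simpl in T; injection T as T2 T4 T6; rewrite T2, T4, T6;
      simpl; repeat split; lra.
Qed.

Definition Eqs (i : nat) : sexp uvar :=
  SMul (SSg (SAdd (SSub (SSub (SMul (K 2) (Fv 0)) (K (Z.of_nat i))) (K (Z.of_nat i))) (K 1)))
       (SSg (SSub (SAdd (SAdd (K (Z.of_nat i)) (K (Z.of_nat i))) (K 1)) (SMul (K 2) (Fv 0)))).

Lemma Eqs_eval (sg : R -> R) (env : uvar -> R) q i :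
  (forall x, 3/4 < x -> sg x = 1) -> (forall x, x < 1/4 -> sg x = 0) ->
  env (UF 0) = INR q -> seval sg env (Eqs i) = if Nat.eqb i q then 1 else 0.
Proof.
  intros H1 H0 E. unfold Eqs, K, Fv; cbn [seval]. rewrite E.
  rewrite <- INR_IZR_INZ.
  destruct (Nat.eqb_spec i q).
  - subst. rewrite !H1 by lra. lra.
  - assert (i < q \/ q < i)%nat as [Hl|Hl] by lia.
    + assert (Hl2: (S i <= q)%nat) by lia. apply le_INR in Hl2. rewrite S_INR in Hl2.
      replace (sg (INR i + INR i + 1 - 2 * INR q)) with 0 by (rewrite H0; lra). lra.
    + assert (Hl2: (S q <= i)%nat) by lia. apply le_INR in Hl2. rewrite S_INR in Hl2.
      replace (sg (2 * INR q - INR i - INR i + 1)) with 0 by (rewrite H0; lra). lra.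
Qed.

Definition inner (F : nat -> sym -> sexp uvar) (i : nat) : sexp uvar :=
  SAdd (SMul isB0 (F i B0)) (SAdd (SMul isS1 (F i S1)) (SMul isS3 (F i S3))).

Definition selsum (F : nat -> sym -> sexp uvar) (k n : nat) : sexp uvar :=
  fold_right (fun i acc => SAdd (SMul (Eqs i) (inner F i)) acc) (K 0) (seq k n).

Lemma selsum_eval (sg : R -> R) (env : uvar -> R) F q a n :
  (forall x, 3/4 < x -> sg x = 1) -> (forall x, x < 1/4 -> sg x = 0) ->
  env (UF 0) = INR q -> (q < n)%nat ->
  seval sg env isB0 = sb B0 a -> seval sg env isS1 = sb S1 a ->
  seval sg env isS3 = sb S3 a ->
  seval sg env (selsum F 0 n) = seval sg env (F q a).
Proof.
  intros H1 H0 Eq Hq EB ES1 ES3.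
  assert (Hin : seval sg env (inner F q) = seval sg env (F q a)).
  { unfold inner; cbn [seval]. rewrite EB, ES1, ES3. destruct a; simpl; ring. }
  assert (G : forall k n, seval sg env (selsum F k n) =
     if andb (Nat.leb k q) (Nat.ltb q (k + n)) then seval sg env (inner F q) else 0).
  { intros k m. revert k. induction m as [|m IH]; intros k.
    - simpl. replace (k + 0)%nat with k by lia.
      destruct (Nat.leb_spec k q); destruct (Nat.ltb_spec q k); simpl; try reflexivity; lia.
    - unfold selsum in *. simpl seq. cbn [fold_right seval]. rewrite IH.
      rewrite (Eqs_eval sg env q k H1 H0 Eq).
      destruct (Nat.eqb_spec k q).
      + subst k. rewrite Nat.leb_refl. replace (Nat.leb (S q) q) with false
          by (symmetry; apply Nat.leb_gt; lia).
        replace (Nat.ltb q (q + S m)) with true by (symmetry; apply Nat.ltb_lt; lia).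
        simpl. ring.
      + replace (S k + m)%nat with (k + S m)%nat by lia.
        destruct (Nat.leb_spec k q); destruct (Nat.leb_spec (S k) q);
          destruct (Nat.ltb_spec q (k + S m)); simpl; try ring; lia. }
  rewrite G. replace (Nat.leb 0 q) with true by reflexivity.
  replace (Nat.ltb q (0 + n)) with true by (symmetry; apply Nat.ltb_lt; lia).
  exact Hin.
Qed.

Lemma selsum_deg F k n : (forall i a, sdeg isF (F i a) = 0%nat) -> sdeg isF (selsum F k n) = 0%nat.
Proof.
  intros H. unfold selsum. generalize (seq k n). intros l. induction l as [|i l IH]; [reflexivity|].
  simpl fold_right. cbn [sdeg]. rewrite IH. unfold inner. cbn [sdeg]. rewrite !H. reflexivity.
Qed.

Definition ecZ (a : sym) : Z := match a with B0 => 2 | S1 => 4 | S3 => 6 end%Z.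
Definition svZ (a : sym) : Z := match a with B0 => 0 | S1 => 1 | S3 => 3 end%Z.

Definition rowq (M : TM) (i : nat) (a : sym) : sexp uvar :=
  let '(q', _, _) := delta M i a in K (Z.of_nat q').
Definition cL (M : TM) (i : nat) (a : sym) : sexp uvar :=
  let '(_, _, mv) := delta M i a in
  match mv with MRight => Hv 0 | MLeft => K 8 | MStay => K 1 end.
Definition bL (M : TM) (i : nat) (a : sym) : sexp uvar :=
  let '(_, a', mv) := delta M i a in
  match mv with MRight => SMul (K (ecZ a')) (Hv 0) | MLeft => SSub (K 0) dLe | MStay => K 0 end.
Definition cV (M : TM) (i : nat) (a : sym) : sexp uvar :=
  let '(_, _, mv) := delta M i a in
  match mv with MRight => K 8 | MLeft => SMul (K 8) (Hv 1) | MStay => K 1 end.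
Definition bV (M : TM) (i : nat) (a : sym) : sexp uvar :=
  let '(_, a', mv) := delta M i a in
  match mv with
  | MRight => SSub (K 0) dVe
  | MLeft => SSub (SAdd (SMul eL0e (Hv 0)) (SMul (K (ecZ a')) (Hv 1))) (SMul (Hv 1) dVe)
  | MStay => SMul (Hv 0) (SSub (K (ecZ a')) dVe) end.
Definition cG (M : TM) (i : nat) (a : sym) : sexp uvar :=
  let '(_, _, mv) := delta M i a in
  match mv with MRight => K 4 | MLeft => Hv 2 | MStay => K 1 end.
Definition bG (M : TM) (i : nat) (a : sym) : sexp uvar :=
  let '(_, a', mv) := delta M i a in
  match mv with
  | MRight => SSub (K 0) c0e
  | MLeft => SSub (SAdd (SMul (Hv 2) sL0e) (SMul (Hv 3) (K (svZ a')))) (SMul (Hv 3) c0e)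
  | MStay => SMul (Hv 2) (SSub (K (svZ a')) c0e) end.

Definition Amat (M : TM) : list (list (sexp uvar)) :=
  [[K (-1); K 0; K 0; K 0];
   [K 0; SSub (selsum (cL M) 0 (nQ M)) (K 1); K 0; K 0];
   [K 0; K 0; SSub (selsum (cV M) 0 (nQ M)) (K 1); K 0];
   [K 0; K 0; K 0; SSub (selsum (cG M) 0 (nQ M)) (K 1)]].
Definition Bvec (M : TM) : list (sexp uvar) :=
  [selsum (rowq M) 0 (nQ M); selsum (bL M) 0 (nQ M); selsum (bV M) 0 (nQ M);
   selsum (bG M) 0 (nQ M)].

Definition Inv (M : TM) (c : config) (fv : list R) : Prop :=
  exists pL p s, (cstate c < nQ M)%nat /\
    fv = [INR (cstate c); enc8 pL; enc8 p; gam4 (p ++ map inj13 s)] /\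
    (forall n, cleft c n = nth n pL B0) /\
    (forall n, cright c n = nth n (p ++ map inj13 s) B0).

Definition envOf (fv hv : list R) (N : nat) (ys : list R) : uvar -> R :=
  fun v => match v with
    | UF j => nth j fv 0 | UH j => nth j hv 0
    | UX => INR N | UY j => nth j ys 0 end.

Definition hvals : list R := [/8; /64; /4; /16].

Lemma ode_step_env sg m A B fv hv N ys :
  ode_step sg m A B fv hv N ys =
  map (fun i =>
         nth i fv 0 + (INR (blen (S N)) - INR (blen N)) *
           (rsum (map (fun j => seval sg (envOf fv hv N ys) (nth j (nth i A []) (SConst 0%Z)) * nth j fv 0)
                      (seq 0 m))
            + seval sg (envOf fv hv N ys) (nth i B (SConst 0%Z))))
      (seq 0 m).
Proof. reflexivity. Qed.

Lemma IZR_ecZ a : IZR (ecZ a) = ecode a.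
Proof. destruct a; reflexivity. Qed.
Lemma IZR_svZ a : IZR (svZ a) = symval a.
Proof. destruct a; reflexivity. Qed.
Lemma list4_eq (a1 a2 a3 a4 b1 b2 b3 b4 : R) :
  a1 = b1 -> a2 = b2 -> a3 = b3 -> a4 = b4 -> [a1; a2; a3; a4] = [b1; b2; b3; b4].
Proof. intros; subst; reflexivity. Qed.

Lemma step_inv sg M c q L V G N ys :
  (forall x, 3/4 < x -> sg x = 1) -> (forall x, x < 1/4 -> sg x = 0) ->
  Inv M c [q; L; V; G] ->
  INR (blen (S N)) - INR (blen N) = 1 ->
  Inv M (step M c) (ode_step sg 4 (Amat M) (Bvec M) [q; L; V; G] hvals N ys).
Proof.
  intros H1 H0 HI HD. rewrite ode_step_env, HD.
  set (env := envOf [q; L; V; G] hvals N ys).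
  cbn [seq map nth rsum fold_right Amat Bvec].
  destruct HI as [pL [p [s [Hq [Efv [HL HR]]]]]].
  injection Efv as Eq EL EV EG.
  assert (Ee0 : env (UF 0) = INR (cstate c)) by (exact Eq).
  assert (Ee1 : env (UF 1) = enc8 pL) by (exact EL).
  assert (Ee2 : env (UF 2) = enc8 p) by (exact EV).
  assert (Ee3 : env (UF 3) = gam4 (p ++ map inj13 s)) by (exact EG).
  destruct (read_eval sg env p s H1 H0 Ee2 Ee3) as [RB [RS1 [RS3 [RdV Rc0]]]].
  destruct (left_eval sg env pL H1 H0 Ee1) as [RdL [ReL RsL]].
  set (a := hd0 (p ++ map inj13 s)) in *.
  cbn [seval].
  rewrite !(selsum_eval sg env _ (cstate c) a (nQ M) H1 H0 Ee0 Hq RB RS1 RS3).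
  assert (Hc0 : cright c 0 = a) by (rewrite HR; reflexivity).
  assert (Hl0 : cleft c 0 = hd0 pL) by (rewrite HL; reflexivity).
  unfold step. rewrite Hc0.
  pose proof (delta_ok M (cstate c) a Hq) as Hok.
  unfold rowq, cL, bL, cV, bV, cG, bG.
  destruct (delta M (cstate c) a) as [[q' a'] mv] eqn:Ed. simpl in Hok.
  assert (EH : forall j, env (UH j) = nth j hvals 0) by reflexivity.
  subst q L V G.
  destruct mv; cbn [seval K Hv Fv]; rewrite ?RdV, ?Rc0, ?RdL, ?ReL, ?RsL, ?EH; cbn [nth hvals].
  all: rewrite <- INR_IZR_INZ.
  all: rewrite ?IZR_ecZ, ?IZR_svZ.
  - exists (tl pL), (hd0 pL :: a' :: tl p), (match p with [] => tl s | _ => s end).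
    split; [exact Hok|]. split; [|split].
    + apply list4_eq; [simpl; ring| | |].
      * destruct pL as [|x pL]; simpl; [ring|]. field.
      * destruct p as [|x p0]; [destruct s as [|y s0]|]; try (destruct y); simpl; try field.
      * unfold a, hd0; destruct p as [|x p0]; [destruct s as [|y s0]|]; try (destruct y); simpl; try field.
    + intros n. cbn [cleft cright]. unfold stail. rewrite HL. destruct pL; destruct n; reflexivity.
    + intros n. cbn [cleft cright]. destruct n as [|[|n]]; simpl; [exact Hl0|reflexivity|].
      unfold stail. rewrite HR.
      destruct p as [|x p0]; [destruct s as [|y s0]|]; simpl; try reflexivity. destruct n; reflexivity.
  - exists (a' :: pL), (tl p), (match p with [] => tl s | _ => s end).
    split; [exact Hok|]. split; [|split].
    + apply list4_eq; [simpl; ring| | |].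
      * simpl; field.
      * destruct p as [|x p0]; [destruct s as [|y s0]|]; try (destruct y); simpl; try field.
      * unfold a, hd0; destruct p as [|x p0]; [destruct s as [|y s0]|]; try (destruct y); simpl; try field.
    + intros n. cbn [cleft cright]. destruct n; simpl; [reflexivity|]. rewrite HL. reflexivity.
    + intros n. cbn [cleft cright]. unfold stail. rewrite HR.
      destruct p as [|x p0]; [destruct s as [|y s0]|]; simpl; try reflexivity. destruct n; reflexivity.
  - exists pL, (a' :: tl p), (match p with [] => tl s | _ => s end).
    split; [exact Hok|]. split; [|split].
    + apply list4_eq; [simpl; ring| | |].
      * simpl; ring.
      * destruct p as [|x p0]; [destruct s as [|y s0]|]; try (destruct y); simpl; try field.
      * unfold a, hd0; destruct p as [|x p0]; [destruct s as [|y s0]|]; try (destruct y); simpl; try field.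
    + intros n. cbn [cleft cright]. apply HL.
    + intros n. cbn [cleft cright]. destruct n as [|n]; simpl; [reflexivity|].
      unfold stail. rewrite HR.
      destruct p as [|x p0]; [destruct s as [|y s0]|]; simpl; try reflexivity. destruct n; reflexivity.
Qed.

Lemma step_noop sg M q L V G N ys :
  INR (blen (S N)) - INR (blen N) = 0 ->
  ode_step sg 4 (Amat M) (Bvec M) [q; L; V; G] hvals N ys = [q; L; V; G].
Proof.
  intros HD. rewrite ode_step_env, HD. cbn [seq map nth rsum fold_right].
  apply list4_eq; ring.
Qed.

Fixpoint natc (k : nat) : pfun :=
  match k with O => cst_fun 1 0 | S k' => comp_fun (bin_fun Rplus) [natc k'; cst_fun 1 1] end.
Fixpoint halves (k : nat) : pfun :=
  match k with O => cst_fun 2 1 | S k' => comp_fun (un_fun (fun x => x / 2)) [halves k'] end.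
Fixpoint hval (k : nat) : R := match k with O => 1 | S k' => hval k' / 2 end.

Lemma natc_eval k y : natc k [y] = Some (INR k).
Proof.
  induction k as [|k IH]; [reflexivity|].
  simpl natc. unfold comp_fun. simpl map. rewrite IH. simpl. destruct k; [f_equal; simpl; lra|reflexivity].
Qed.
Lemma halves_eval k x y : halves k [x; y] = Some (hval k).
Proof.
  induction k as [|k IH]; [reflexivity|].
  simpl halves. unfold comp_fun. simpl map. rewrite IH. reflexivity.
Qed.

Lemma natc_LDL sg k : LDL sg 1 (natc k).
Proof.
  induction k as [|k IH]; simpl; [apply LDL_zero|].
  apply LDL_comp with (k := 2%nat); [apply LDL_add|reflexivity|].
  intros j Hj. destruct j as [|[|j]]; simpl; [exact IH|apply LDL_one|lia].
Qed.
Lemma halves_LDL sg k : LDL sg 2 (halves k).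
Proof.
  induction k as [|k IH]; simpl; [apply LDL_one|].
  apply LDL_comp with (k := 1%nat); [apply LDL_half|reflexivity|].
  intros j Hj. destruct j as [|j]; simpl; [exact IH|lia].
Qed.

Definition gl (M : TM) : list pfun := [natc (q0 M); cst_fun 1 0; cst_fun 1 0; proj_fun 1 0].
Definition hl : list pfun := [halves 3; halves 6; halves 2; halves 4].

Lemma hl_eval x y : opt_all (map (fun hj => hj [x; y]) hl) = Some hvals.
Proof.
  unfold hl. cbn [map]. rewrite !halves_eval. simpl. unfold hvals. repeat f_equal; field.
Qed.

Lemma iter_inv sg M w :
  (forall x, 3/4 < x -> sg x = 1) -> (forall x, x < 1/4 -> sg x = 0) ->
  forall N, exists fv,
    ode_iter sg 4 (gl M) hl (Amat M) (Bvec M) N [gamma_word (map inj13 w)] = Some fv /\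
    Inv M (Nat.iter (pred (blen N)) (step M) (init_config M w)) fv.
Proof.
  intros H1 H0 N. induction N as [|N IH].
  - eexists. split.
    + simpl. rewrite natc_eval. reflexivity.
    + exists [], [], w. simpl. split; [apply q0_ok|]. split; [|split].
      * rewrite gamma_word_gam4. reflexivity.
      * intros n; destruct n; reflexivity.
      * intros n; reflexivity.
  - destruct IH as [fv [Hit HI]].
    pose proof HI as HI'. destruct HI' as [pL [p [s [_ [Efv _]]]]].
    cbn [ode_iter]. rewrite Hit, hl_eval. rewrite Efv.
    rewrite Efv in HI. unfold blen in HI |- *. simpl pred in HI |- *.
    destruct (Nat.log2_succ_or N) as [E|E]; rewrite E.
    + eexists; split; [reflexivity|].
      simpl Nat.iter. apply step_inv; auto.
      unfold blen. rewrite E. rewrite !S_INR. ring.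
    + eexists; split; [reflexivity|].
      rewrite step_noop. exact HI. unfold blen. rewrite E. ring.
Qed.

Lemma deg_helper M : forall r e, In r (Amat M) -> In e r -> sdeg isF e = 0%nat.
Proof.
  intros r e Hr He. unfold Amat in Hr. simpl in Hr.
  destruct Hr as [<-|[<-|[<-|[<-|[]]]]]; simpl in He;
   repeat (destruct He as [<-|He]; [try reflexivity|]); try contradiction;
   cbn [sdeg]; rewrite selsum_deg; try reflexivity;
   intros i a; unfold cL, cV, cG;
   destruct (delta M i a) as [[? ?] []]; reflexivity.
Qed.

Lemma deg_helperB M : forall e, In e (Bvec M) -> sdeg isF e = 0%nat.
Proof.
  intros e He. unfold Bvec in He. simpl in He.
  repeat (destruct He as [<-|He]; [apply selsum_deg; intros i a;
     unfold rowq, bL, bV, bG;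
     destruct (delta M i a) as [[? ?] []]; reflexivity|]); contradiction.
Qed.

Theorem mainTheorem9 :
  forall (sg : R -> R), IsSgBar sg ->
  forall (M : TM) (f : list sig13 -> list sig13) (T : nat -> nat),
    computes_in_time M f T ->
    exists ftilde : pfun,
      LDL sg 2 ftilde /\
      forall w : list sig13,
        ftilde [INR (2 ^ T (length w)); gamma_word (map inj13 w)]
        = Some (gamma_word (map inj13 (f w))).
Proof.
  intros sg [_ [_ [H1 H0]]] M f T HM.
  exists (ode_fun sg 1 4 (gl M) hl (Amat M) (Bvec M) 3). split.
  - apply LDL_ode with (k := 4%nat); try reflexivity.
    + intros j Hj. destruct j as [|[|[|[|j]]]]; simpl.
      * apply natc_LDL.
      * apply LDL_zero.
      * apply LDL_zero.
      * apply LDL_proj. lia.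
      * lia.
    + intros j Hj. destruct j as [|[|[|[|j]]]]; cbn [nth hl]; try apply halves_LDL; lia.
    + intros r Hr. unfold Amat in Hr. simpl in Hr.
      destruct Hr as [<-|[<-|[<-|[<-|[]]]]]; reflexivity.
    + apply deg_helper.
    + apply deg_helperB.
    + lia.
  - intros w. unfold ode_fun. simpl length. simpl Nat.eqb. cbv iota.
    rewrite to_nat_INR.
    destruct (iter_inv sg M w H1 H0 (2 ^ T (length w))) as [fv [Hit HI]].
    rewrite Hit. unfold blen in HI. rewrite Nat.log2_pow2 in HI by lia. simpl pred in HI.
    destruct HI as [pL [p [s [_ [Efv [_ HR]]]]]]. rewrite Efv. simpl option_map.
    destruct (HM w) as [_ Hc]. simpl in Hc.
    rewrite Hc in HR. f_equal. rewrite gamma_word_gam4.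
    apply gam4_ext. intros n. rewrite <- HR. reflexivity.
Qed.
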